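(* Let $\mathbb{C}$ be a pointed protomodular category in which centralizers of Bourn-normal monomorphisms exist and are Bourn-normal monomorphisms. Suppose $A$ is an abelian and complete${}^*$ object of $\mathbb{C}$ and $B$ is a strong-complete object of $\mathbb{C}$. If $\hom(B,A)=\{0\}$, then $B\times A$ is complete${}^*$.
   Context: A pointed category with finite limits is protomodular if the split short five lemma holds. Morphisms $f:A'\to X$, $g:B'\to X$ commute if some $\varphi:A'\times B'\to X$ has $\varphi\langle1,0\rangle=f$, $\varphi\langle0,1\rangle=g$; the centralizer $z_f:Z_X(A',f)\to X$ of $f$ is the terminal object among morphisms into $X$ commuting with $f$. An object $A$ is abelian if $1_A$ commutes with $1_A$. A protosplit monomorphism is a kernel of a split epimorphism; a monomorphism $m:S\to Y$ is Bourn-normal if there is an equivalence relation $(R,r_1,r_2)$ on $Y$ and $\tilde m:S\times S\to R$ with $r_1\tilde m=m\pi_1$, $r_2\tilde m=m\pi_2$ and the square $r_1\tilde m=m\pi_1$ a pullback. An object $X$ is complete${}^*$ if every Bourn-normal monomorphism with domain $X$ is a split monomorphism, and strong-complete if every protosplit monomorphism with domain $X$ is a split monomorphism with a unique retraction. *)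

(* Defs.v *)
Record Category := {
  Ob :> Type;
  Hom : Ob -> Ob -> Type;
  comp : forall {a b c : Ob}, Hom b c -> Hom a b -> Hom a c;
  idm : forall a : Ob, Hom a a;
  comp_assoc : forall a b c d (h : Hom c d) (g : Hom b c) (f : Hom a b),
      comp h (comp g f) = comp (comp h g) f;
  comp_id_l : forall a b (f : Hom a b), comp (idm b) f = f;
  comp_id_r : forall a b (f : Hom a b), comp f (idm a) = f
}.

Arguments Hom {C} : rename.
Arguments comp {C a b c} : rename.
Arguments idm {C} : rename.

Notation "g \o f" := (comp g f) (at level 40, left associativity).

Section Notions.
Variable C : Category.

Definition is_initial (x : C) : Prop := forall y : C, exists! f : Hom x y, True.
Definition is_terminal (x : C) : Prop := forall y : C, exists! f : Hom y x, True.
Definition is_zero_object (Z : C) : Prop := is_initial Z /\ is_terminal Z.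

Definition is_zero_mor (Z : C) {x y : C} (f : Hom x y) : Prop :=
  exists (a : Hom x Z) (b : Hom Z y), f = b \o a.

Definition is_iso {x y : C} (f : Hom x y) : Prop :=
  exists g : Hom y x, g \o f = idm x /\ f \o g = idm y.

Definition is_mono {x y : C} (m : Hom x y) : Prop :=
  forall (t : C) (u v : Hom t x), m \o u = m \o v -> u = v.

Definition is_split_mono {x y : C} (m : Hom x y) : Prop :=
  exists r : Hom y x, r \o m = idm x.

Definition is_product (a b P : C) (p1 : Hom P a) (p2 : Hom P b) : Prop :=
  forall (t : C) (f : Hom t a) (g : Hom t b),
    exists! h : Hom t P, p1 \o h = f /\ p2 \o h = g.

Definition is_pullback {a b c P : C} (f : Hom a c) (g : Hom b c)
    (q1 : Hom P a) (q2 : Hom P b) : Prop :=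
  f \o q1 = g \o q2 /\
  forall (t : C) (u : Hom t a) (v : Hom t b), f \o u = g \o v ->
    exists! h : Hom t P, q1 \o h = u /\ q2 \o h = v.

Definition has_finite_limits : Prop :=
  (exists T : C, is_terminal T) /\
  forall (a b c : C) (f : Hom a c) (g : Hom b c),
    exists (P : C) (q1 : Hom P a) (q2 : Hom P b), is_pullback f g q1 q2.

Definition is_kernel (Z : C) {k0 a b : C} (k : Hom k0 a) (p : Hom a b) : Prop :=
  is_zero_mor Z (p \o k) /\
  forall (t : C) (g : Hom t a), is_zero_mor Z (p \o g) ->
    exists! h : Hom t k0, k \o h = g.

(* split short five lemma *)
Definition protomodular (Z : C) : Prop :=
  forall (A B K A' B' K' : C)
    (p : Hom A B) (s : Hom B A) (k : Hom K A)
    (p' : Hom A' B') (s' : Hom B' A') (k' : Hom K' A')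
    (u : Hom K K') (v : Hom A A') (w : Hom B B'),
    p \o s = idm B -> is_kernel Z k p ->
    p' \o s' = idm B' -> is_kernel Z k' p' ->
    v \o k = k' \o u -> p' \o v = w \o p -> v \o s = s' \o w ->
    is_iso u -> is_iso w -> is_iso v.

(* f : A' -> X and g : B' -> X commute: some phi : A' x B' -> X with
   phi <1,0> = f and phi <0,1> = g *)
Definition commute (Z : C) {A' B' X : C} (f : Hom A' X) (g : Hom B' X) : Prop :=
  exists (P : C) (p1 : Hom P A') (p2 : Hom P B'),
    is_product A' B' P p1 p2 /\
    exists phi : Hom P X,
      (forall i1 : Hom A' P, p1 \o i1 = idm A' -> is_zero_mor Z (p2 \o i1) ->
         phi \o i1 = f) /\
      (forall i2 : Hom B' P, is_zero_mor Z (p1 \o i2) -> p2 \o i2 = idm B' ->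
         phi \o i2 = g).

Definition is_centralizer (Z : C) {A' X Zc : C} (f : Hom A' X) (z : Hom Zc X) : Prop :=
  commute Z f z /\
  forall (W : C) (g : Hom W X), commute Z f g ->
    exists! h : Hom W Zc, z \o h = g.

Definition is_abelian (Z : C) (A : C) : Prop := commute Z (idm A) (idm A).

Definition is_equivalence_relation {Y R : C} (r1 r2 : Hom R Y) : Prop :=
  (forall (t : C) (u v : Hom t R), r1 \o u = r1 \o v -> r2 \o u = r2 \o v -> u = v) /\
  (forall (t : C) (a : Hom t Y), exists u : Hom t R, r1 \o u = a /\ r2 \o u = a) /\
  (forall (t : C) (u : Hom t R), exists v : Hom t R, r1 \o v = r2 \o u /\ r2 \o v = r1 \o u) /\
  (forall (t : C) (u v : Hom t R), r2 \o u = r1 \o v ->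
     exists w : Hom t R, r1 \o w = r1 \o u /\ r2 \o w = r2 \o v).

Definition is_protosplit_mono (Z : C) {S Y : C} (m : Hom S Y) : Prop :=
  exists (Q : C) (p : Hom Y Q) (s : Hom Q Y), p \o s = idm Q /\ is_kernel Z m p.

Definition is_bourn_normal {S Y : C} (m : Hom S Y) : Prop :=
  is_mono m /\
  exists (P : C) (pi1 pi2 : Hom P S), is_product S S P pi1 pi2 /\
  exists (R : C) (r1 r2 : Hom R Y), is_equivalence_relation r1 r2 /\
  exists mt : Hom P R,
    r1 \o mt = m \o pi1 /\ r2 \o mt = m \o pi2 /\ is_pullback r1 m mt pi1.

Definition is_complete_star (X : C) : Prop :=
  forall (Y : C) (m : Hom X Y), is_bourn_normal m -> is_split_mono m.

Definition is_strong_complete (Z : C) (X : C) : Prop :=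
  forall (Y : C) (m : Hom X Y), is_protosplit_mono Z m ->
    exists! r : Hom Y X, r \o m = idm X.

Definition centralizers_of_normal_monos_normal (Z : C) : Prop :=
  forall (S X : C) (m : Hom S X), is_bourn_normal m ->
    exists (Zc : C) (z : Hom Zc X), is_centralizer Z m z /\ is_bourn_normal z.

End Notions.

(* Main.v *)
Require Import Defs.

Section Dev.
Variable C : Category.
Variable Z : Ob C.
Hypothesis hZ : is_zero_object C Z.

Local Notation isz f := (is_zero_mor C Z f).

Lemma rw2 {b c d : Ob C} {f : Hom c d} {g : Hom b c} {k : Hom b d} (H : f \o g = k) :
  forall e (x : Hom d e), x \o f \o g = x \o k.
Proof. intros. rewrite <- H, comp_assoc. reflexivity. Qed.

Lemma rw3 {a b c d : Ob C} {f : Hom c d} {g : Hom b c} {h : Hom a b} {k : Hom a d}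
  (H : f \o g \o h = k) :
  forall e (x : Hom d e), x \o f \o g \o h = x \o k.
Proof. intros. rewrite <- H, !comp_assoc. reflexivity. Qed.

Ltac nrm := repeat (rewrite comp_assoc || rewrite comp_id_l || rewrite comp_id_r).
Ltac nrmH H := repeat (rewrite comp_assoc in H || rewrite comp_id_l in H || rewrite comp_id_r in H).
Ltac arw H := nrm; first [rewrite H | rewrite (rw3 H) | rewrite (rw2 H)]; nrm.
Ltac arwl H := nrm; first [rewrite <- H | rewrite <- (rw3 H) | rewrite <- (rw2 H)]; nrm.

Lemma to_Z_unique {x : Ob C} (a a' : Hom x Z) : a = a'.
Proof.
  destruct hZ as [_ hT]. destruct (hT x) as [a0 [_ U]].
  rewrite <- (U a I), <- (U a' I). reflexivity.
Qed.

Lemma from_Z_unique {y : Ob C} (b b' : Hom Z y) : b = b'.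
Proof.
  destruct hZ as [hI _]. destruct (hI y) as [a0 [_ U]].
  rewrite <- (U b I), <- (U b' I). reflexivity.
Qed.

Lemma toZ (x : Ob C) : exists a : Hom x Z, True.
Proof. destruct hZ as [_ hT]. destruct (hT x) as [a0 _]. exists a0; exact I. Qed.

Lemma fromZ (x : Ob C) : exists a : Hom Z x, True.
Proof. destruct hZ as [hI _]. destruct (hI x) as [a0 _]. exists a0; exact I. Qed.

Lemma zero_unique {x y : Ob C} (f g : Hom x y) : isz f -> isz g -> f = g.
Proof.
  intros [a [b ->]] [a' [b' ->]].
  rewrite (to_Z_unique a a'), (from_Z_unique b b'). reflexivity.
Qed.

Lemma zero_exists (x y : Ob C) : exists f : Hom x y, isz f.
Proof.
  destruct (toZ x) as [a _]. destruct (fromZ y) as [b _].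
  exists (b \o a). exists a, b. reflexivity.
Qed.

Lemma zero_comp_l {x y w : Ob C} (f : Hom x y) (g : Hom y w) : isz f -> isz (g \o f).
Proof. intros [a [b ->]]. exists a, (g \o b). apply comp_assoc. Qed.

Lemma zero_comp_r {w x y : Ob C} (f : Hom w x) (g : Hom x y) : isz g -> isz (g \o f).
Proof. intros [a [b ->]]. exists (a \o f), b. symmetry. apply comp_assoc. Qed.

Lemma zero_via {x y : Ob C} (a : Hom x Z) (b : Hom Z y) : isz (b \o a).
Proof. exists a, b. reflexivity. Qed.

Ltac zt := first [ assumption | apply zero_via | (apply zero_comp_r; zt) | (apply zero_comp_l; zt) | (rewrite <- comp_assoc; zt) ].
Ltac zeq := apply zero_unique; zt.

Lemma prod_ext {x y P : Ob C} {p1 : Hom P x} {p2 : Hom P y}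
  (hP : is_product C x y P p1 p2) {t : Ob C} (h h' : Hom t P) :
  p1 \o h = p1 \o h' -> p2 \o h = p2 \o h' -> h = h'.
Proof.
  intros E1 E2. destruct (hP t (p1 \o h') (p2 \o h')) as [h0 [_ U]].
  rewrite <- (U h (conj E1 E2)), <- (U h' (conj eq_refl eq_refl)). reflexivity.
Qed.

Lemma prod_sym {x y P : Ob C} {p1 : Hom P x} {p2 : Hom P y} :
  is_product C x y P p1 p2 -> is_product C y x P p2 p1.
Proof.
  intros hP t f g. destruct (hP t g f) as [h [[E1 E2] U]].
  exists h. split. split; assumption. intros h' [F1 F2]. apply U. split; assumption.
Qed.

Lemma prod_pair {x y P : Ob C} {p1 : Hom P x} {p2 : Hom P y}
  (hP : is_product C x y P p1 p2) {t : Ob C} (f : Hom t x) (g : Hom t y) :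
  exists h, p1 \o h = f /\ p2 \o h = g.
Proof. destruct (hP t f g) as [h [H _]]. exists h; exact H. Qed.

Lemma prod_inj1 {x y P : Ob C} {p1 : Hom P x} {p2 : Hom P y}
  (hP : is_product C x y P p1 p2) : exists i1 : Hom x P, p1 \o i1 = idm x /\ isz (p2 \o i1).
Proof.
  destruct (zero_exists x y) as [z0 Hz].
  destruct (prod_pair hP (idm x) z0) as [h [E1 E2]]. exists h. split. exact E1. rewrite E2. exact Hz.
Qed.

Lemma prod_inj2 {x y P : Ob C} {p1 : Hom P x} {p2 : Hom P y}
  (hP : is_product C x y P p1 p2) : exists i2 : Hom y P, isz (p1 \o i2) /\ p2 \o i2 = idm y.
Proof.
  destruct (prod_inj1 (prod_sym hP)) as [i [E1 E2]]. exists i. split; assumption.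
Qed.

Lemma pb_ext {a b c P : Ob C} {f : Hom a c} {g : Hom b c} {q1 : Hom P a} {q2 : Hom P b}
  (hpb : is_pullback C f g q1 q2) {t : Ob C} (u v : Hom t P) :
  q1 \o u = q1 \o v -> q2 \o u = q2 \o v -> u = v.
Proof.
  intros E1 E2. destruct hpb as [sq U].
  assert (f \o (q1 \o v) = g \o (q2 \o v)) as E by (nrm; rewrite sq; reflexivity).
  destruct (U t _ _ E) as [h0 [_ V]].
  rewrite <- (V u (conj E1 E2)), <- (V v (conj eq_refl eq_refl)). reflexivity.
Qed.

Lemma pb_mono {a b c P : Ob C} {f : Hom a c} {g : Hom b c} {q1 : Hom P a} {q2 : Hom P b}
  (hpb : is_pullback C f g q1 q2) : is_mono C f -> is_mono C q2.
Proof.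
  intros hf t u v E. apply (pb_ext hpb). 2: exact E.
  apply hf. nrm. rewrite (proj1 hpb). arw E. reflexivity.
Qed.

Hypothesis hlim : has_finite_limits C.
Hypothesis hprot : protomodular C Z.

Lemma pb_exists {a b c : Ob C} (f : Hom a c) (g : Hom b c) :
  exists (P : Ob C) (q1 : Hom P a) (q2 : Hom P b), is_pullback C f g q1 q2.
Proof. exact (proj2 hlim a b c f g). Qed.

Lemma product_exists (x y : Ob C) : exists P p1 p2, is_product C x y P p1 p2.
Proof.
  destruct (toZ x) as [ax _]. destruct (toZ y) as [ay _].
  destruct (pb_exists ax ay) as [P [q1 [q2 [sq U]]]].
  exists P, q1, q2. intros t f g.
  apply (U t f g). apply to_Z_unique.
Qed.

Lemma kernel_of_inj {x y P : Ob C} {p1 : Hom P x} {p2 : Hom P y}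
  (hP : is_product C x y P p1 p2) (i1 : Hom x P) :
  p1 \o i1 = idm x -> isz (p2 \o i1) -> is_kernel C Z i1 p2.
Proof.
  intros E1 E2. split. exact E2.
  intros t g Hg. exists (p1 \o g). split.
  - apply (prod_ext hP).
    + arw E1. reflexivity.
    + nrm. zeq.
  - intros h' Eh. rewrite <- Eh. arw E1. rewrite ?comp_id_l. reflexivity.
Qed.

Lemma protosplit_inj {x y P : Ob C} {p1 : Hom P x} {p2 : Hom P y}
  (hP : is_product C x y P p1 p2) (i1 : Hom x P) :
  p1 \o i1 = idm x -> isz (p2 \o i1) -> is_protosplit_mono C Z i1.
Proof.
  intros E1 E2. destruct (prod_inj2 hP) as [i2 [F1 F2]].
  exists y, p2, i2. split. exact F2. apply (kernel_of_inj hP); assumption.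
Qed.

Lemma SC_unique {S X P : Ob C} (hS : is_strong_complete C Z S)
  {p1 : Hom P S} {p2 : Hom P X} (hP : is_product C S X P p1 p2) (i1 : Hom S P) :
  p1 \o i1 = idm S -> isz (p2 \o i1) -> forall r, r \o i1 = idm S -> r = p1.
Proof.
  intros E1 E2 r Er.
  destruct (hS P i1 (protosplit_inj hP i1 E1 E2)) as [r0 [_ U]].
  rewrite <- (U r Er), <- (U p1 E1). reflexivity.
Qed.

Lemma factor_through_mono {X Y P W M : Ob C} {p1 : Hom P X} {p2 : Hom P Y}
  (hP : is_product C X Y P p1 p2) (i1 : Hom X P) (i2 : Hom Y P)
  (E1 : p1 \o i1 = idm X) (E2 : isz (p2 \o i1))
  (F1 : isz (p1 \o i2)) (F2 : p2 \o i2 = idm Y)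
  (m : Hom M W) (hm : is_mono C m) (phi : Hom P W) (a : Hom X M) (b : Hom Y M) :
  m \o a = phi \o i1 -> m \o b = phi \o i2 -> exists phi', phi = m \o phi'.
Proof.
  intros Ha Hb.
  destruct (pb_exists m phi) as [E [e1 [e2 hpb]]].
  pose proof (pb_mono hpb hm) as He2.
  destruct (proj2 hpb X a i1 Ha) as [j1 [[J1 J1'] _]].
  destruct (proj2 hpb Y b i2 Hb) as [j2 [[J2 J2'] _]].
  assert (is_iso C e2) as [g [G1 G2]].
  { apply (hprot E X Y P X Y (p1 \o e2) j1 j2 p1 i1 i2 (idm Y) e2 (idm X)).
    - arw J1'. exact E1.
    - split. arw J2'. exact F1.
      intros t g Hg.
      assert (e2 \o g = i2 \o (p2 \o e2 \o g)) as Eg.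
      { apply (prod_ext hP).
        + nrm. zeq.
        + arw F2. rewrite ?comp_id_l. reflexivity. }
      exists (p2 \o e2 \o g). split.
      + apply He2. rewrite Eg. arw J2'. reflexivity.
      + intros h' Eh. rewrite <- Eh. arw J2'. arw F2. reflexivity.
    - exact E1.
    - apply (kernel_of_inj (prod_sym hP)); assumption.
    - rewrite J2'. symmetry. apply comp_id_r.
    - symmetry. apply comp_id_l.
    - rewrite J1'. symmetry. apply comp_id_r.
    - exists (idm Y). split; apply comp_id_l.
    - exists (idm X). split; apply comp_id_l. }
  exists (e1 \o g).
  rewrite <- (comp_id_r _ _ _ phi), <- G2. nrm. rewrite <- (proj1 hpb). reflexivity.
Qed.

Lemma joint_epi {X Y P W : Ob C} {p1 : Hom P X} {p2 : Hom P Y}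
  (hP : is_product C X Y P p1 p2) (i1 : Hom X P) (i2 : Hom Y P)
  (E1 : p1 \o i1 = idm X) (E2 : isz (p2 \o i1))
  (F1 : isz (p1 \o i2)) (F2 : p2 \o i2 = idm Y) (f g : Hom P W) :
  f \o i1 = g \o i1 -> f \o i2 = g \o i2 -> f = g.
Proof.
  intros H1 H2.
  destruct (product_exists W W) as [Q [q1 [q2 hQ]]].
  destruct (prod_pair hQ (idm W) (idm W)) as [D [D1 D2]].
  assert (is_mono C D) as hD.
  { intros t u v Euv. rewrite <- (comp_id_l C _ _ u), <- (comp_id_l C _ _ v).
    rewrite <- D1. nrmH Euv. rewrite <- !comp_assoc, Euv. reflexivity. }
  destruct (prod_pair hQ f g) as [phi [P1 P2]].
  destruct (factor_through_mono hP i1 i2 E1 E2 F1 F2 D hD phi (f \o i1) (f \o i2)) as [phi' Ephi].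
  - apply (prod_ext hQ). arw D1. rewrite ?comp_id_l. arw P1. reflexivity.
    arw D2. rewrite ?comp_id_l. arw P2. exact H1.
  - apply (prod_ext hQ). arw D1. rewrite ?comp_id_l. arw P1. reflexivity.
    arw D2. rewrite ?comp_id_l. arw P2. exact H2.
  - rewrite <- P1, <- P2, Ephi. nrm. rewrite D1, D2. reflexivity.
Qed.

Lemma kernel_normal {Y A K : Ob C} (q : Hom Y A) (k : Hom K Y) :
  is_kernel C Z k q -> is_bourn_normal C k.
Proof.
  intros [Hz Hu].
  assert (hk : is_mono C k).
  { intros t u v E. assert (isz (q \o (k \o v))) as H by (nrm; zt).
    destruct (Hu t (k \o v) H) as [h [_ U]].
    rewrite <- (U u E), <- (U v eq_refl). reflexivity. }
  split. exact hk.
  destruct (product_exists K K) as [PK [pi1 [pi2 hPK]]].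
  exists PK, pi1, pi2. split. exact hPK.
  destruct (pb_exists q q) as [Eq [e1 [e2 hE]]].
  pose proof (proj1 hE) as Esq.
  exists Eq, e1, e2. split.
  - split; [|split; [|split]].
    + intros t u v Eu Ev. exact (pb_ext hE u v Eu Ev).
    + intros t a. destruct (proj2 hE t a a eq_refl) as [u [[U1 U2] _]].
      exists u. split; assumption.
    + intros t u.
      assert (q \o (e2 \o u) = q \o (e1 \o u)) as H by (nrm; rewrite Esq; reflexivity).
      destruct (proj2 hE t _ _ H) as [v [[V1 V2] _]]. exists v; split; assumption.
    + intros t u v Euv.
      assert (q \o (e1 \o u) = q \o (e2 \o v)) as H.
      { nrm. rewrite Esq. arw Euv. rewrite Esq. reflexivity. }
      destruct (proj2 hE t _ _ H) as [w [[W1 W2] _]]. exists w; split; assumption.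
  - assert (q \o (k \o pi1) = q \o (k \o pi2)) as H by (apply zero_unique; nrm; zt).
    destruct (proj2 hE PK _ _ H) as [mt [[T1 T2] _]].
    exists mt. split. exact T1. split. exact T2.
    split. exact T1.
    intros t u v Euv.
    assert (isz (q \o (e2 \o u))) as H0.
    { nrm. rewrite <- Esq. arw Euv. zt. }
    destruct (Hu t _ H0) as [w [Wk _]].
    destruct (prod_pair hPK v w) as [h [H1 H2]].
    exists h. split. split.
    + apply (pb_ext hE).
      * arw T1. arw H1. symmetry; exact Euv.
      * arw T2. arw H2. exact Wk.
    + exact H1.
    + intros h' [Eh1 Eh2]. apply (prod_ext hPK).
      * rewrite H1, Eh2. reflexivity.
      * rewrite H2. apply hk. rewrite Wk, <- Eh1. arw T2. reflexivity.
Qed.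

Lemma intersect_normal {Y S1 S2 S : Ob C} (m1 : Hom S1 Y) (m2 : Hom S2 Y)
  (s1 : Hom S S1) (s2 : Hom S S2) :
  is_bourn_normal C m1 -> is_bourn_normal C m2 -> is_pullback C m1 m2 s1 s2 ->
  is_bourn_normal C (m1 \o s1).
Proof.
  intros [hm1 [P1 [pa [pb [hP1 [R1 [a1 [a2 [[jm1 [rf1 [sy1 tr1]]] [mt1 [M1 [M1' hpb1]]]]]]]]]]]]
         [hm2 [P2 [qa [qb [hP2 [R2 [b1 [b2 [[jm2 [rf2 [sy2 tr2]]] [mt2 [M2 [M2' hpb2]]]]]]]]]]]]
         hS.
  pose proof (proj1 hS) as Ssq.
  destruct (product_exists Y Y) as [YY [y1 [y2 hYY]]].
  destruct (prod_pair hYY a1 a2) as [c1 [C11 C12]].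
  destruct (prod_pair hYY b1 b2) as [c2 [C21 C22]].
  destruct (pb_exists c1 c2) as [R [d1 [d2 hR]]].
  pose proof (proj1 hR) as Rsq.
  assert (D1 : a1 \o d1 = b1 \o d2).
  { rewrite <- C11, <- C21. arw Rsq. reflexivity. }
  assert (D2 : a2 \o d1 = b2 \o d2).
  { rewrite <- C12, <- C22. arw Rsq. reflexivity. }
  assert (Rmk : forall t (u1 : Hom t R1) (u2 : Hom t R2), a1 \o u1 = b1 \o u2 -> a2 \o u1 = b2 \o u2 ->
            exists w : Hom t R, d1 \o w = u1 /\ d2 \o w = u2).
  { intros t u1 u2 E1 E2.
    assert (c1 \o u1 = c2 \o u2) as E.
    { apply (prod_ext hYY). arw C11. arw C21. exact E1. arw C12. arw C22. exact E2. }
    destruct (proj2 hR t _ _ E) as [w [Hw _]]. exists w. exact Hw. }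
  assert (hms : is_mono C (m1 \o s1)).
  { intros t u v E. nrmH E. apply (pb_ext hS).
    - apply hm1. nrm. exact E.
    - apply hm2. nrm. rewrite <- Ssq. exact E. }
  split. exact hms.
  destruct (product_exists S S) as [PS [pi1 [pi2 hPS]]].
  exists PS, pi1, pi2. split. exact hPS.
  exists R, (a1 \o d1), (a2 \o d1). split.
  - split; [|split; [|split]].
    + intros t u v Eu Ev. nrmH Eu. nrmH Ev. apply (pb_ext hR).
      * apply jm1; nrm; assumption.
      * apply jm2; nrm.
        -- rewrite <- D1. exact Eu.
        -- rewrite <- D2. exact Ev.
    + intros t a.
      destruct (rf1 t a) as [u1 [U1 U1']]. destruct (rf2 t a) as [u2 [U2 U2']].
      destruct (Rmk t u1 u2) as [w [W1 W2]].
      * rewrite U1, U2. reflexivity.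
      * rewrite U1', U2'. reflexivity.
      * exists w. nrm. rewrite !(rw2 W1). split; assumption.
    + intros t u.
      destruct (sy1 t (d1 \o u)) as [v1 [V1 V1']]. destruct (sy2 t (d2 \o u)) as [v2 [V2 V2']].
      destruct (Rmk t v1 v2) as [w [W1 W2]].
      * rewrite V1, V2. arw D2. reflexivity.
      * rewrite V1', V2'. arw D1. reflexivity.
      * exists w. nrm. rewrite !(rw2 W1). rewrite V1, V1'. nrm. split; reflexivity.
    + intros t u v Euv. nrmH Euv.
      assert (a2 \o (d1 \o u) = a1 \o (d1 \o v)) as E1 by (nrm; exact Euv).
      destruct (tr1 t _ _ E1) as [w1 [W1 W1']].
      assert (b2 \o (d2 \o u) = b1 \o (d2 \o v)) as E2 by (nrm; rewrite <- D1, <- D2; exact Euv).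
      destruct (tr2 t _ _ E2) as [w2 [W2 W2']].
      destruct (Rmk t w1 w2) as [w [X1 X2]].
      * rewrite W1, W2. arw D1. reflexivity.
      * rewrite W1', W2'. arw D2. reflexivity.
      * exists w. nrm. rewrite !(rw2 X1). rewrite W1, W1'. nrm. split; reflexivity.
  - destruct (prod_pair hP1 (s1 \o pi1) (s1 \o pi2)) as [sg1 [G11 G12]].
    destruct (prod_pair hP2 (s2 \o pi1) (s2 \o pi2)) as [sg2 [G21 G22]].
    destruct (Rmk PS (mt1 \o sg1) (mt2 \o sg2)) as [mt [T1 T2]].
    { nrm. rewrite M1, M2. arw G11. arw G21. arw Ssq. reflexivity. }
    { nrm. rewrite M1', M2'. arw G12. arw G22. arw Ssq. reflexivity. }
    assert (R1e : a1 \o d1 \o mt = m1 \o s1 \o pi1).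
    { arw T1. rewrite M1. arw G11. reflexivity. }
    assert (R2e : a2 \o d1 \o mt = m1 \o s1 \o pi2).
    { arw T1. rewrite M1'. arw G12. reflexivity. }
    exists mt. split. nrm. exact R1e. split. nrm. exact R2e.
    split. nrm. exact R1e.
    intros t u v Euv.
    assert (a1 \o (d1 \o u) = m1 \o (s1 \o v)) as E1 by (nrm; nrmH Euv; exact Euv).
    destruct (proj2 hpb1 t _ _ E1) as [h1 [[H11 H12] _]].
    assert (b1 \o (d2 \o u) = m2 \o (s2 \o v)) as E2.
    { nrm. rewrite <- D1, <- Ssq. nrmH Euv. exact Euv. }
    destruct (proj2 hpb2 t _ _ E2) as [h2 [[H21 H22] _]].
    assert (m1 \o (pb \o h1) = m2 \o (qb \o h2)) as E3.
    { nrm. rewrite <- M1', <- M2'. arw H11. arw H21. arw D2. reflexivity. }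
    destruct (proj2 hS t _ _ E3) as [w [[W1 W2] _]].
    destruct (prod_pair hPS v w) as [h [Hh1 Hh2]].
    assert (Hs1 : sg1 \o h = h1).
    { apply (prod_ext hP1).
      + rewrite H12. arw G11. arw Hh1. reflexivity.
      + arw G12. arw Hh2. exact W1. }
    assert (Hs2 : sg2 \o h = h2).
    { apply (prod_ext hP2).
      + rewrite H22. arw G21. arw Hh1. reflexivity.
      + arw G22. arw Hh2. exact W2. }
    assert (Hmt : mt \o h = u).
    { apply (pb_ext hR).
      - arw T1. arw Hs1. exact H11.
      - arw T2. arw Hs2. exact H21. }
    exists h. split. split. exact Hmt. exact Hh1.
    intros h' [Eh1 Eh2]. apply (prod_ext hPS).
    + rewrite Hh1, Eh2. reflexivity.
    + rewrite Hh2. apply hms. transitivity (a2 \o d1 \o u).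
      * rewrite <- comp_assoc, W1. nrm. rewrite <- M1'. arw H11. reflexivity.
      * rewrite <- Eh1. nrm. rewrite R2e. reflexivity.
Qed.

Lemma normal_split_sc {S Y : Ob C} (hS : is_strong_complete C Z S) (m : Hom S Y) :
  is_bourn_normal C m -> exists r, r \o m = idm S.
Proof.
  intros [hm [PS [pi1 [pi2 [hPS [R [r1 [r2 [[jm [rf [sy tr]]] [mt [M1 [M2 hpb]]]]]]]]]]]].
  destruct (prod_inj2 hPS) as [i2 [I1 I2]].
  destruct (rf Y (idm Y)) as [dl [Dl1 Dl2]].
  assert (K2 : r2 \o (mt \o i2) = m) by (nrm; rewrite M2; arw I2; reflexivity).
  assert (hk : is_mono C (mt \o i2)).
  { intros t u v E. apply hm. rewrite <- K2. nrm. nrmH E. arw E. reflexivity. }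
  assert (hker : is_kernel C Z (mt \o i2) r1).
  { split.
    - nrm. rewrite M1. zt.
    - intros t g Hg. destruct (zero_exists t S) as [z0 Hz0].
      assert (r1 \o g = m \o z0) as H by zeq.
      destruct (proj2 hpb t g z0 H) as [h [[Hh1 Hh2] _]].
      assert (H0 : h = i2 \o (pi2 \o h)).
      { apply (prod_ext hPS).
        - rewrite Hh2. nrm. zeq.
        - arw I2. reflexivity. }
      assert (EK : mt \o i2 \o (pi2 \o h) = g).
      { rewrite <- Hh1. transitivity (mt \o (i2 \o (pi2 \o h))). nrm. reflexivity. rewrite <- H0. reflexivity. }
      exists (pi2 \o h). split. exact EK.
      intros x Ex. apply hk. rewrite Ex. exact EK. }
  destruct (hS R (mt \o i2)) as [rho [Hrho _]].
  { exists Y, r1, dl. split. exact Dl1. exact hker. }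
  assert (Hrm : rho \o mt = pi2).
  { apply (SC_unique hS (prod_sym hPS) i2 I2 I1). rewrite <- comp_assoc. exact Hrho. }
  destruct (prod_pair hPS (idm S) (idm S)) as [dg [G1 G2]].
  assert (Hdl : dl \o m = mt \o dg).
  { apply jm.
    - arw Dl1. rewrite M1. arw G1. reflexivity.
    - arw Dl2. rewrite M2. arw G2. reflexivity. }
  exists (rho \o dl). rewrite <- comp_assoc, Hdl, comp_assoc, Hrm. exact G2.
Qed.

Lemma main_aux (hcent : centralizers_of_normal_monos_normal C Z)
  (A B : Ob C)
  (hAab : is_abelian C Z A) (hAc : is_complete_star C A)
  (hBs : is_strong_complete C Z B)
  (hhom : forall f : Hom B A, is_zero_mor C Z f)
  (P : Ob C) (p1 : Hom P B) (p2 : Hom P A)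
  (hP : is_product C B A P p1 p2) :
  is_complete_star C P.
Proof.
  intros Y m hmn. pose proof (proj1 hmn) as hm.
  destruct (prod_inj1 hP) as [iB [IB1 IB2]].
  destruct (prod_inj2 hP) as [iA [IA1 IA2]].
  destruct (hcent P Y m hmn) as [Zc [z [[hcomm huniv] hzn]]].
  pose proof (proj1 hzn) as hzm.
  assert (hcA : commute C Z m (m \o iA)).
  { destruct (product_exists P A) as [P2 [s1 [s2 hP2]]].
    destruct hAab as [Q [q1 [q2 [hQ [psi [Hpsi1 Hpsi2]]]]]].
    destruct (prod_inj1 hQ) as [j1 [J11 J12]]. destruct (prod_inj2 hQ) as [j2 [J21 J22]].
    pose proof (Hpsi1 j1 J11 J12) as Pj1. pose proof (Hpsi2 j2 J21 J22) as Pj2.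
    destruct (prod_pair hQ (p2 \o s1) s2) as [beta [B1 B2]].
    destruct (prod_pair hP (p1 \o s1) (psi \o beta)) as [alpha [A1 A2]].
    exists P2, s1, s2. split. exact hP2. exists (m \o alpha). split.
    - intros i1 Ei1 Zi1.
      assert (H : alpha \o i1 = idm P).
      { apply (prod_ext hP).
        + arw A1. arw Ei1. reflexivity.
        + arw A2.
          assert (H : beta \o i1 = j1 \o p2).
          { apply (prod_ext hQ).
            - arw B1. arw Ei1. arw J11. reflexivity.
            - arw B2. zeq. }
          arw H. arw Pj1. reflexivity. }
      rewrite <- comp_assoc, H, comp_id_r. reflexivity.
    - intros i2 Zi2 Ei2.
      assert (H : alpha \o i2 = iA).
      { apply (prod_ext hP).
        + arw A1. zeq.
        + arw A2.
          assert (H : beta \o i2 = j2).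
          { apply (prod_ext hQ).
            - arw B1. zeq.
            - arw B2. arw Ei2. rewrite J22. reflexivity. }
          arw H. rewrite Pj2. symmetry. exact IA2. }
      rewrite <- comp_assoc, H. reflexivity. }
  destruct (huniv A (m \o iA) hcA) as [h [Hh _]].
  assert (hpbA : is_pullback C m z iA h).
  { split. symmetry. exact Hh.
    intros t u v Euv.
    assert (Hp1u : isz (p1 \o u)).
    { destruct hcomm as [P3 [s1 [s2 [hP3 [phi3 [Hphi1 Hphi2]]]]]].
      destruct (product_exists B t) as [P4 [t1 [t2 hP4]]].
      destruct (prod_inj1 hP4) as [k1 [K11 K12]]. destruct (prod_inj2 hP4) as [k2 [K21 K22]].
      destruct (prod_inj1 hP3) as [e1 [E11 E12]]. destruct (prod_inj2 hP3) as [e2 [E21 E22]].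
      pose proof (Hphi1 e1 E11 E12) as Pe1. pose proof (Hphi2 e2 E21 E22) as Pe2.
      destruct (prod_pair hP3 (iB \o t1) (v \o t2)) as [gam [G1 G2]].
      assert (Gk1 : gam \o k1 = e1 \o iB).
      { apply (prod_ext hP3).
        - arw G1. arw K11. arw E11. reflexivity.
        - arw G2. zeq. }
      assert (Gk2 : gam \o k2 = e2 \o v).
      { apply (prod_ext hP3).
        - arw G1. zeq.
        - arw G2. arw K22. arw E22. reflexivity. }
      destruct (factor_through_mono hP4 k1 k2 K11 K12 K21 K22 m hm (phi3 \o gam) iB u) as [psi' Hpsi'].
      + arw Gk1. rewrite Pe1. reflexivity.
      + arw Gk2. rewrite Pe2. exact Euv.
      + assert (Q1 : psi' \o k1 = iB).
        { apply hm. nrm. rewrite <- Hpsi'. arw Gk1. rewrite Pe1. reflexivity. }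
        assert (Q2 : psi' \o k2 = u).
        { apply hm. nrm. rewrite <- Hpsi'. arw Gk2. rewrite Pe2. symmetry. exact Euv. }
        assert (H : p1 \o psi' = t1).
        { apply (SC_unique hBs hP4 k1 K11 K12). arw Q1. exact IB1. }
        rewrite <- Q2, comp_assoc, H. exact K21. }
    assert (Eu : u = iA \o (p2 \o u)).
    { apply (prod_ext hP).
      - nrm. zeq.
      - arw IA2. reflexivity. }
    exists (p2 \o u). split. split.
    - symmetry. exact Eu.
    - apply hzm. rewrite <- Euv. transitivity (m \o (iA \o (p2 \o u))).
      + nrm. rewrite Hh. reflexivity.
      + rewrite <- Eu. reflexivity.
    - intros w' [W1 W2]. rewrite <- W1. nrm. arw IA2. reflexivity. }
  pose proof (intersect_normal m z iA h hmn hzn hpbA) as hnA.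
  destruct (hAc Y (m \o iA) hnA) as [q0 Hq0].
  assert (Hq0m : q0 \o m = p2).
  { apply (joint_epi hP iB iA IB1 IB2 IA1 IA2).
    - apply zero_unique. apply hhom. exact IB2.
    - rewrite <- comp_assoc, Hq0. symmetry. exact IA2. }
  destruct (fromZ A) as [z0 _].
  destruct (pb_exists q0 z0) as [K [kq [kz hK]]].
  assert (hker : is_kernel C Z kq q0).
  { split.
    - rewrite (proj1 hK). apply zero_via.
    - intros t g Hg. destruct (toZ t) as [zt' _].
      assert (q0 \o g = z0 \o zt') as H by (apply zero_unique; [exact Hg | apply zero_via]).
      destruct (proj2 hK t g zt' H) as [w [[W1 W2] _]].
      exists w. split. exact W1. intros w' Ew'. apply (pb_ext hK).
      + rewrite W1, Ew'. reflexivity.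
      + apply to_Z_unique. }
  pose proof (kernel_normal q0 kq hker) as hnK.
  pose proof (proj1 hnK) as hkm.
  assert (HzB : isz (q0 \o (m \o iB))) by (rewrite comp_assoc, Hq0m; exact IB2).
  destruct (proj2 hker B (m \o iB) HzB) as [gB [HgB _]].
  assert (hpbB : is_pullback C m kq iB gB).
  { split. symmetry; exact HgB.
    intros t u v Euv.
    assert (Hz : isz (p2 \o u)).
    { rewrite <- Hq0m. rewrite <- comp_assoc, Euv, comp_assoc. apply zero_comp_r. exact (proj1 hker). }
    assert (Eu : u = iB \o (p1 \o u)).
    { apply (prod_ext hP).
      - arw IB1. reflexivity.
      - nrm. zeq. }
    exists (p1 \o u). split. split.
    - symmetry; exact Eu.
    - apply hkm. rewrite <- Euv. transitivity (m \o (iB \o (p1 \o u))).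
      + nrm. rewrite HgB. reflexivity.
      + rewrite <- Eu. reflexivity.
    - intros w' [W1 W2]. rewrite <- W1. nrm. arw IB1. reflexivity. }
  pose proof (intersect_normal m kq iB gB hmn hnK hpbB) as hnB.
  destruct (normal_split_sc hBs (m \o iB) hnB) as [rB HrB].
  assert (HrBm : rB \o m = p1).
  { apply (SC_unique hBs hP iB IB1 IB2). rewrite <- comp_assoc. exact HrB. }
  destruct (prod_pair hP rB q0) as [r [R1 R2]].
  exists r. apply (prod_ext hP).
  - nrm. rewrite R1, HrBm. reflexivity.
  - nrm. rewrite R2, Hq0m. reflexivity.
Qed.

End Dev.

Theorem proposition4p17 (C : Category) (Z : C)
  (hZ : is_zero_object C Z)
  (hlim : has_finite_limits C)
  (hprot : protomodular C Z)
  (hcent : centralizers_of_normal_monos_normal C Z)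
  (A B : C)
  (hAab : is_abelian C Z A) (hAc : is_complete_star C A)
  (hBs : is_strong_complete C Z B)
  (hhom : forall f : Hom B A, is_zero_mor C Z f)
  (P : C) (p1 : Hom P B) (p2 : Hom P A)
  (hP : is_product C B A P p1 p2) :
  is_complete_star C P.
Proof.
  exact (main_aux C Z hZ hlim hprot hcent A B hAab hAc hBs hhom P p1 p2 hP).
Qed.
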